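(* Let $G$ be a group with finite generating set $(X,\pi)$ and let $\tau\colon G\to\mathbb{Z}$ be an ordering quasi-morphism with kernel $C$. If a $\tau$-transducer exists, then $P_\tau=\{g\in G:\tau(g)>0\}$ is a one-counter positive cone relative to $C$, i.e. $P_\tau$ is a positive cone relative to $C$ and there is a one-counter language $\mathcal{L}\subseteq X^*$ with $\pi(\mathcal{L})=P_\tau$. In particular, if there is a one-counter language $\mathcal{L}_C\subseteq X^*$ such that $P_C=\pi(\mathcal{L}_C)$ is a positive cone for $C$, then $P_\tau\cup P_C$ is the image under $\pi$ of a one-counter language and is a positive cone of $G$.
   Context: A finite generating set is a finite set $X$ with a surjective monoid homomorphism $\pi\colon X^*\to G$. For a subgroup $K\le G$, a positive cone relative to $K$ is a subsemigroup $P$ with $G=P\sqcup K\sqcup P^{-1}$; a positive cone is one relative to $\{1\}$. A one-counter language is one accepted by a nondeterministic pushdown automaton with a single stack symbol. An ordering quasi-morphism is $\tau\colon G\to\mathbb{Z}$ such that (i) $C=\{g:\tau(g)=0\}$ is a subgroup (the kernel), (ii) $\tau(g^{-1})=-\tau(g)$, (iii) $\tau(g)+\tau(h)+\tau((gh)^{-1})\le1$ for all $g,h$. A rational transducer $\mathbb{T}=(\mathcal{S},X,Y,\delta,s_0,\mathcal{A})$ has finite state set $\mathcal{S}$, input alphabet $X$, output alphabet $Y$, initial state $s_0$, accepting states $\mathcal{A}$ and $\delta\colon\mathcal{S}\times(X\sqcup\{\epsilon\})\to$ finite subsets of $\mathcal{S}\times Y^*$; $(r,v)\in\delta(s,u)$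 means there is a sequence of transitions from $s$ to $r$ with inputs concatenating to $u$ and outputs to $v$. $\mathbb{T}(u)=\{v:(a,v)\in\delta(s_0,u),a\in\mathcal{A}\}$ and $\mathbb{T}^{-1}(\mathcal{M})=\{u:\exists(a,v)\in\delta(s_0,u),a\in\mathcal{A},v\in\mathcal{M}\}$. With $\pi_{\mathbb{Z}}\colon\{t,t^{-1}\}^*\to\mathbb{Z}$, $t\mapsto1,t^{-1}\mapsto-1$, a $\tau$-transducer is a rational transducer with input alphabet $X$ and output alphabet $\{t,t^{-1}\}$ such that $G=\pi(\mathbb{T}^{-1}(\{t,t^{-1}\}^* ))$ and $\pi_{\mathbb{Z}}(v)=\tau(\pi(w))$ for every $w\in\mathbb{T}^{-1}(\{t,t^{-1}\}^* )$ and $v\in\mathbb{T}(w)$. *)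

(* Defs.v *)
From HB Require Import structures.
From mathcomp Require Import all_boot all_order all_algebra.
Set Implicit Arguments. Unset Strict Implicit. Unset Printing Implicit Defensive.
Import Order.TTheory GRing.Theory Num.Theory.

Record Grp := {
  gcarrier :> Type;
  gmul : gcarrier -> gcarrier -> gcarrier;
  gone : gcarrier;
  ginv : gcarrier -> gcarrier;
  gmulA : forall x y z, gmul x (gmul y z) = gmul (gmul x y) z;
  gmul1 : forall x, gmul gone x = x;
  gmulV : forall x, gmul (ginv x) x = gone
}.
Arguments gmul {g}. Arguments gone {g}. Arguments ginv {g}.

Section GroupNotions.
Variable G : Grp.

Definition subgroup (H : G -> Prop) : Prop :=
  H gone /\ (forall g h, H g -> H h -> H (gmul g h)) /\ (forall g, H g -> H (ginv g)).

Definition subsemigroup (P : G -> Prop) : Prop :=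
  forall g h, P g -> P h -> P (gmul g h).

Definition rel_pos_cone (K P : G -> Prop) : Prop :=
  subsemigroup P /\
  forall g, (P g \/ K g \/ P (ginv g)) /\
            ~ (P g /\ K g) /\ ~ (P g /\ P (ginv g)) /\ ~ (K g /\ P (ginv g)).

Definition pos_cone (P : G -> Prop) : Prop := rel_pos_cone (fun g => g = gone) P.

Definition pos_cone_of (H P : G -> Prop) : Prop :=
  (forall g, P g -> H g) /\ subsemigroup P /\
  forall g, H g -> (P g \/ g = gone \/ P (ginv g)) /\
            ~ (P g /\ g = gone) /\ ~ (P g /\ P (ginv g)) /\ ~ (g = gone /\ P (ginv g)).

Definition ordering_qm (tau : G -> int) : Prop :=
  subgroup (fun g => tau g = 0%R) /\
  (forall g, tau (ginv g) = (- tau g)%R) /\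
  (forall g h, (tau g + tau h + tau (ginv (gmul g h)) <= 1)%R).

Definition fin_gen_set (X : finType) (pi : seq X -> G) : Prop :=
  pi [::] = gone /\ (forall u v, pi (u ++ v) = gmul (pi u) (pi v)) /\
  (forall g, exists w, pi w = g).

Definition image_is (X : Type) (pi : seq X -> G) (L : seq X -> Prop) (P : G -> Prop) :=
  forall g, P g <-> exists w, L w /\ pi w = g.
End GroupNotions.

Unset Implicit Arguments.
(* A nondeterministic pushdown automaton whose stack alphabet consists of a
   single symbol A (above an unremovable bottom-of-stack marker), accepting
   by final state.  A stack A^n is represented by the counter n.  A transition
   depends on the state, the input (a letter or epsilon = None) and the top of
   the stack (bottom marker iff n = 0); it replaces the top symbol A by A^k
   (if n > 0), or pushes A^k above the bottom marker (if n = 0). *)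
Record oca (X : finType) := {
  oca_Q : finType;
  oca_q0 : oca_Q;
  oca_acc : pred oca_Q;
  oca_trans : oca_Q -> option X -> bool -> seq (oca_Q * nat)
}.

Definition opt_word (X : Type) (o : option X) : seq X :=
  if o is Some a then [:: a] else [::].

Inductive oca_run (X : finType) (M : oca X) :
  oca_Q X M -> nat -> seq X -> oca_Q X M -> nat -> Prop :=
| oca_run_nil q n : oca_run X M q n [::] q n
| oca_run_step q n o q' k w q'' m :
    (q', k) \in oca_trans X M q o (n == 0)%N ->
    oca_run X M q' (n.-1 + k)%N w q'' m ->
    oca_run X M q n (opt_word X o ++ w) q'' m.

Definition oca_accepts (X : finType) (M : oca X) (w : seq X) : Prop :=
  exists q m, oca_run X M (oca_q0 X M) 0 w q m /\ oca_acc X M q.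

Definition one_counter (X : finType) (L : seq X -> Prop) : Prop :=
  exists M : oca X, forall w, L w <-> oca_accepts X M w.

Record transducer (X Y : finType) := {
  tr_S : finType;
  tr_s0 : tr_S;
  tr_acc : pred tr_S;
  tr_delta : tr_S -> option X -> seq (tr_S * seq Y)
}.

Inductive tr_run (X Y : finType) (T : transducer X Y) :
  tr_S X Y T -> seq X -> tr_S X Y T -> seq Y -> Prop :=
| tr_run_nil s : tr_run X Y T s [::] s [::]
| tr_run_step s o s' y u r v :
    (s', y) \in tr_delta X Y T s o ->
    tr_run X Y T s' u r v ->
    tr_run X Y T s (opt_word X o ++ u) r (y ++ v).

Definition tr_out (X Y : finType) (T : transducer X Y) (u : seq X) (v : seq Y) : Prop :=
  exists a, tr_run X Y T (tr_s0 X Y T) u a v /\ tr_acc X Y T a.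

Definition tr_preimage (X Y : finType) (T : transducer X Y) (M : seq Y -> Prop) (u : seq X) : Prop :=
  exists a v, tr_run X Y T (tr_s0 X Y T) u a v /\ tr_acc X Y T a /\ M v.

(* Output alphabet {t, t^{-1}} encoded as bool: true = t, false = t^{-1}. *)
Definition piZ (v : seq bool) : int :=
  foldr (fun b z => ((if b then 1 else -1) + z)%R) 0%R v.

Definition tau_transducer (G : Grp) (X : finType) (pi : seq X -> G) (tau : G -> int)
    (T : transducer X bool) : Prop :=
  (forall g, exists w, tr_preimage X bool T (fun _ => True) w /\ pi w = g) /\
  (forall w v, tr_preimage X bool T (fun _ => True) w -> tr_out X bool T w v -> piZ v = tau (pi w)).
Arguments tau_transducer {G X}.
Arguments one_counter {X}.

(* Main.v *)
Require Import Defs.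
From mathcomp Require Import all_boot all_order all_algebra.
From mathcomp Require Import zify ring lra.
Import Order.TTheory GRing.Theory Num.Theory.
Set Implicit Arguments. Unset Strict Implicit.

Section Grp.
Variable G : Grp.
Lemma gmulV' (x : G) : gmul x (ginv x) = gone.
Proof.
transitivity (gmul (gmul (ginv (ginv x)) (ginv x)) (gmul x (ginv x))).
  by rewrite gmulV gmul1.
by rewrite -gmulA (gmulA (ginv x) x) gmulV gmul1 gmulV.
Qed.
Lemma gmul1r (x : G) : gmul x gone = x.
Proof. by rewrite -(gmulV x) gmulA gmulV' gmul1. Qed.
Lemma ginv1 : ginv (gone : G) = gone.
Proof. by rewrite -{2}(gmulV gone) gmul1r. Qed.
End Grp.

Section OCA.
Variable X : finType.

Lemma oca_run_cat (M : oca X) q n w1 q' n' w2 q'' m :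
  oca_run X M q n w1 q' n' -> oca_run X M q' n' w2 q'' m ->
  oca_run X M q n (w1 ++ w2) q'' m.
Proof.
elim=> [//|q1 n1 o q1' k w q2 m2 Ht _ IH] H2.
rewrite -catA; apply: oca_run_step Ht _; exact: IH.
Qed.

Variables M1 M2 : oca X.
Definition uQ := option (oca_Q X M1 + oca_Q X M2)%type.
Definition utrans (q : uQ) (o : option X) (z : bool) : seq (uQ * nat) :=
  match q with
  | None => if o is None then [:: (Some (inl (oca_q0 X M1)), 0%N); (Some (inr (oca_q0 X M2)), 0%N)] else [::]
  | Some (inl q1) => [seq (Some (inl t.1), t.2) | t <- oca_trans X M1 q1 o z]
  | Some (inr q2) => [seq (Some (inr t.1), t.2) | t <- oca_trans X M2 q2 o z]
  end.
Definition uacc (q : uQ) : bool :=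
  match q with None => false | Some (inl q1) => oca_acc X M1 q1 | Some (inr q2) => oca_acc X M2 q2 end.
Definition uM : oca X := {| oca_Q := uQ; oca_q0 := None; oca_acc := uacc; oca_trans := utrans |}.

Lemma urun_l q n w q' m : oca_run X M1 q n w q' m ->
  oca_run X uM (Some (inl q)) n w (Some (inl q')) m.
Proof.
elim=> [q1 n1|q1 n1 o q1' k w1 q2 m2 Ht _ IH]; first exact: oca_run_nil.
apply: oca_run_step IH; rewrite /= (map_f (fun t => (Some (inl t.1), t.2)) Ht) //.
Qed.
Lemma urun_r q n w q' m : oca_run X M2 q n w q' m ->
  oca_run X uM (Some (inr q)) n w (Some (inr q')) m.
Proof.
elim=> [q1 n1|q1 n1 o q1' k w1 q2 m2 Ht _ IH]; first exact: oca_run_nil.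
apply: oca_run_step IH; rewrite /= (map_f (fun t => (Some (inr t.1), t.2)) Ht) //.
Qed.

Lemma urun_inv Q n w Q' m : oca_run X uM Q n w Q' m ->
  (forall q, Q = Some (inl q) -> exists q', Q' = Some (inl q') /\ oca_run X M1 q n w q' m) /\
  (forall q, Q = Some (inr q) -> exists q', Q' = Some (inr q') /\ oca_run X M2 q n w q' m).
Proof.
elim=> [q1 n1|q1 n1 o q1' k w1 q2 m2 Ht _ [IH1 IH2]].
  by split=> q ->; exists q; split=> //; apply: oca_run_nil.
split=> q E; subst q1; move: Ht => /= /mapP [[t1 t2] Ht [E1 E2]]; subst.
  have [q' [-> R]] := IH1 t1 erefl; exists q'; split=> //; exact: oca_run_step Ht R.
have [q' [-> R]] := IH2 t1 erefl; exists q'; split=> //; exact: oca_run_step Ht R.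
Qed.

End OCA.

Lemma union_one_counter (X : finType) (L1 L2 : seq X -> Prop) :
  one_counter L1 -> one_counter L2 -> one_counter (fun w => L1 w \/ L2 w).
Proof.
move=> [N1 H1] [N2 H2]; exists (uM N1 N2) => w; rewrite H1 H2; split.
- move=> [[q [m [R A]]]|[q [m [R A]]]].
    exists (Some (inl q)), m; split=> //.
    have -> : w = opt_word X None ++ w by [].
    eapply oca_run_step; last exact: (urun_l _ R); by rewrite /= inE eqxx.
  exists (Some (inr q)), m; split=> //.
  have -> : w = opt_word X None ++ w by [].
  eapply oca_run_step; last exact: (urun_r _ R); by rewrite /= !inE eqxx orbT.
- move=> [Q [m [R A]]]; inversion R; subst.
    by [].
  clear R; move: H; case: o H0 => [a|] H0 //=; rewrite !inE => /orP [] /eqP [E1 E2]; subst.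
    left; have [q'' [E'' R'']] := proj1 (urun_inv H0) _ erefl.
    subst; exists q'', m; by split.
  right; have [q'' [E'' R'']] := proj2 (urun_inv H0) _ erefl.
  subst; exists q'', m; by split.
Qed.

Lemma eps_step (X : finType) (M : oca X) q n q' k w q'' m :
  (q', k) \in oca_trans X M q None (n == 0)%N -> oca_run X M q' (n.-1 + k)%N w q'' m ->
  oca_run X M q n w q'' m.
Proof. move=> H R; exact: (oca_run_step X M q n None q' k w q'' m H R). Qed.

Local Open Scope ring_scope.
Definition valz (b : bool) (n : nat) : int := if b then n%:Z else - n%:Z.

Lemma piZ_cat u v : piZ (u ++ v) = piZ u + piZ v.
Proof. elim: u => [|a u IH] /=; first by rewrite add0r. by rewrite IH addrA. Qed.

Lemma piZ_size v : (`|piZ v| <= size v)%N.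
Proof. elim: v => [|a v IH] //=; case: a; lia. Qed.

Lemma valz_abs (x : int) : valz (0 <= x) `|x|%N = x.
Proof. rewrite /valz; case: (lerP 0 x) => h; lia. Qed.

Section Sim.
Variable X : finType.
Variable T : transducer X bool.
Local Notation S := (tr_S X bool T).
Local Notation delta := (tr_delta X bool T).
Definition Kb : nat := (\max_(s : S) \max_(o : option X) \max_(t <- delta s o) size t.2)%N.

Lemma size_lt t s o : t \in delta s o -> (size t.2 < Kb.+1)%N.
Proof.
move=> Ht; rewrite ltnS /Kb.
apply: leq_trans (leq_bigmax s); apply: leq_trans (leq_bigmax o).
exact: (leq_bigmax_seq t).
Qed.

Definition tQ := option (S * bool * (bool * 'I_Kb.+1)).
Definition ttrans (q : tQ) (o : option X) (z : bool) : seq (tQ * nat) :=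
 match q with
 | None => [::]
 | Some (s, b, (db, c)) =>
   if (0 < c)%N then
     if o is None then
       [:: if z then (Some (s, db, (db, inord c.-1)), 1%N)
           else if b == db then (Some (s, b, (db, inord c.-1)), 2%N)
           else (Some (s, b, (db, inord c.-1)), 0%N)]
     else [::]
   else
     [seq (Some (t.1, b, ((0 <= piZ t.2), inord `|piZ t.2|%N)), (if z then 0 else 1)%N) | t <- delta s o]
     ++ (if o is None then if b && ~~ z && tr_acc X bool T s then [:: (None, 0%N)] else [::] else [::])
 end.
Definition tacc (q : tQ) : bool := if q is None then true else false.
Definition tM : oca X := {| oca_Q := tQ; oca_q0 := Some (tr_s0 X bool T, true, (true, ord0)); oca_acc := tacc; oca_trans := ttrans |}.

Lemma drain s db : forall c (i : 'I_Kb.+1), nat_of_ord i = c -> forall b n,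
  exists b' n', oca_run X tM (Some (s, b, (db, i))) n [::] (Some (s, b', (db, ord0))) n' /\
    valz b' n' = valz b n + valz db c.
Proof.
elim=> [|c IH] i Hi b n.
  have -> : i = ord0 by apply: val_inj.
  exists b, n; split; first exact: oca_run_nil. by rewrite /valz; case: db; lia.
have Hc : (c < Kb.+1)%N by rewrite -Hi ltnW.
have Hic : nat_of_ord (inord c : 'I_Kb.+1) = c by rewrite inordK.
have Hpos : (0 < i)%N by rewrite Hi.
case En: (n == 0)%N.
  move/eqP: En => En; subst n.
  have [b' [n' [R E]]] := IH _ Hic db 1%N.
  exists b', n'; split.
    eapply eps_step; last exact: R.
      by rewrite /= Hpos Hi /= inE.
  rewrite E; rewrite /valz; clear IH R; case: db E; case: b; lia.
case Eb: (b == db).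
  have [b' [n' [R E]]] := IH _ Hic b n.+1.
  exists b', n'; split.
    have Hn : (n.-1 + 2 = n.+1)%N by move/negbT: En; lia.
    rewrite -Hn in R; eapply eps_step; last exact: R.
    by rewrite /= Hpos En Eb Hi /= inE.
  rewrite E; move/eqP: Eb => <-; rewrite /valz; clear IH R; case: b E; lia.
have [b' [n' [R E]]] := IH _ Hic b n.-1.
exists b', n'; split.
  rewrite -(addn0 n.-1) in R; eapply eps_step; last exact: R.
  by rewrite /= Hpos En Eb Hi /= inE.
rewrite E; move: Eb En; rewrite /valz; clear IH R; case: b E; case: db => //= _ _ /negbT; lia.
Qed.


Lemma simA s u r v : tr_run X bool T s u r v -> forall db b n,
  exists db' b' n', oca_run X tM (Some (s, b, (db, ord0))) n u (Some (r, b', (db', ord0))) n' /\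
    valz b' n' = valz b n + piZ v.
Proof.
elim=> [s1|s1 o s' y u1 r1 v1 Ht _ IH] db b n.
  exists db, b, n; split; first exact: oca_run_nil. by rewrite addr0.
have Hy : (`|piZ y| < Kb.+1)%N.
  apply: leq_ltn_trans (piZ_size y) _; exact: (size_lt Ht).
have [b1 [n1 [R1 E1]]] := drain s' (0 <= piZ y) (inordK Hy) b n.
have [db2 [b2 [n2 [R2 E2]]]] := IH (0 <= piZ y) b1 n1.
exists db2, b2, n2; split.
  have Hn : (n.-1 + (if n == 0 then 0 else 1) = n)%N by case: (n) => [|k] //=; rewrite addn1.
  rewrite -Hn in R1.
  eapply oca_run_step; last exact: (oca_run_cat R1 R2).
  rewrite /= mem_cat; apply/orP; left.
  exact: (map_f (fun t => (Some (t.1, b, ((0 <= piZ t.2), inord `|piZ t.2|%N)), (if n == 0 then 0 else 1)%N)) Ht).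
by rewrite E2 E1 valz_abs piZ_cat addrA.
Qed.

Lemma simB q n w q'' m : oca_run X tM q n w q'' m -> q'' = None ->
  match q with
  | None => w = [::]
  | Some (s, b, (db, c)) => exists r v, tr_run X bool T s w r v /\ tr_acc X bool T r /\
      (0 < valz b n + valz db c + piZ v)
  end.
Proof.
elim=> [q1 n1 E|q1 n1 o q1' k w1 q2 m2 Ht _ IH E]; first by subst.
move: (IH E) => {}IH.
case: q1 Ht => [[[s b] [db c]]|] //= Ht.
case Hc: (0 < c)%N Ht => Ht.
  case: o Ht => [a|] //= Ht.
  have Hc' : (c.-1 < Kb.+1)%N by rewrite (leq_ltn_trans (leq_pred _)).
  have Hcc : (inord c.-1 : 'I_Kb.+1) = c.-1 :> nat by rewrite inordK.
  move: Ht; rewrite inE.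
  case En: (n1 == 0)%N; last case Eb: (b == db); move/eqP => [E1 E2]; subst;
    have [r [v [Hr [Ha Hv]]]] := IH; exists r, v; (split; first done); (split; first done);
    move: Hv; rewrite Hcc /valz.
  - move/eqP: En => ->; clear IH Hr; case: db {Hcc}; case: b; lia.
  - move/eqP: Eb => <-; clear IH Hr; move/negbT: En; case: b {Hcc}; lia.
  - move/negbT: En; move/negbT: Eb; clear IH Hr; case: b {Hcc}; case: db => //= _; lia.
have Hc0 : nat_of_ord c = 0%N by move/negbT: Hc; rewrite -eqn0Ngt => /eqP.
rewrite mem_cat in Ht; case/orP: Ht => Ht.
  case/mapP: Ht => [[s' y] Ht' [E1 E2]]; subst.
  have [r [v [Hr [Ha Hv]]]] := IH.
  exists r, (y ++ v); split; first exact: tr_run_step Ht' Hr.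
  split; first done.
  have Hy : (`|piZ y| < Kb.+1)%N.
    apply: leq_ltn_trans (piZ_size y) _; exact: (size_lt Ht').
  move: Hv; rewrite /= inordK // valz_abs piZ_cat Hc0.
  have -> : (n1.-1 + (if n1 == 0 then 0 else 1) = n1)%N by case: (n1) => [|k] //=; rewrite addn1.
  have -> : valz db 0 = 0 by case: (db).
  by rewrite addr0 addrA.
case: o Ht => [a|] //=.
case Hb: (b && ~~ (n1 == 0)%N && tr_acc X bool T s) => //; rewrite inE => /eqP [E1 E2]; subst.
move: IH => /= ->.
move/andP: Hb => [/andP [Hb Hn] Ha].
exists s, [::]; split; first exact: tr_run_nil.
split; first done.
rewrite Hc0 Hb /valz /= addr0; case: (db); move: Hn; clear; lia.
Qed.

End Sim.

Theorem proposition5p6 (G : Grp) (X : finType) (pi : seq X -> G) (tau : G -> int) :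
  fin_gen_set pi ->
  ordering_qm tau ->
  (exists T : transducer X bool, tau_transducer pi tau T) ->
  let C := fun g : G => tau g = 0%R in
  let Ptau := fun g : G => (0 < tau g)%R in
  (rel_pos_cone C Ptau /\
   exists L : seq X -> Prop, one_counter L /\ image_is pi L Ptau) /\
  (forall LC : seq X -> Prop, one_counter LC ->
     forall PC : G -> Prop, image_is pi LC PC -> pos_cone_of C PC ->
     (exists L : seq X -> Prop, one_counter L /\
        image_is pi L (fun g => Ptau g \/ PC g)) /\
     pos_cone (fun g => Ptau g \/ PC g)).
Proof.
move=> _ [[C1 [Cmul Cinv]] [Hinv Hqm]] [T [Hsurj Hval]] C Ptau.
have lb : forall g h, tau g + tau h - 1 <= tau (gmul g h).
  by move=> g h; have := Hqm g h; rewrite Hinv; lia.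
have imgT : image_is pi (oca_accepts X (tM T)) Ptau.
  move=> g; split.
  - rewrite /Ptau => Hpos.
    have [w [[a [v [R [Ha _]]]] Ew]] := Hsurj g.
    have Hv : piZ v = tau (pi w).
      apply: Hval; first by exists a, v.
      by exists a.
    have [db' [b' [n' [Rm E]]]] := simA R true true 0.
    have Hb : b' = true /\ (n' == 0)%N = false.
      move: E; rewrite Hv Ew /valz /= add0r; case: (b') Hpos; case: (n') => //=; lia.
    case: Hb => Hb Hn; subst b'.
    exists w; split => //.
    exists None, (n'.-1 + 0)%N; split => //.
    rewrite -[w]cats0; apply: (oca_run_cat Rm).
    apply: eps_step; last exact: oca_run_nil.
    by rewrite /= mem_cat Hn Ha /= inE eqxx orbT.
  - move=> [w [[q [m [R Hacc]]] Ew]].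
    case: q R Hacc => [q|] R //= _.
    have := simB R erefl; rewrite /= => [[r [v [Hr [Ha Hv]]]]].
    have Hv' : piZ v = tau (pi w).
      apply: Hval; first by exists r, v.
      by exists r.
    rewrite /Ptau -Ew -Hv'; move: Hv; rewrite /valz /=; lia.
have gcancel1 : forall g h : G, gmul (gmul g h) (ginv h) = g.
  by move=> g h; rewrite -gmulA gmulV' gmul1r.
have gcancel2 : forall g h : G, gmul (ginv g) (gmul g h) = h.
  by move=> g h; rewrite gmulA gmulV gmul1.
split.
  split.
    split.
      move=> g h; rewrite /Ptau => Hg Hh; have := lb g h; lia.
    move=> g; rewrite /C /Ptau Hinv; lia.
  exists (oca_accepts X (tM T)); split => //.
  by exists (tM T).
move=> LC HLC PC imgC [PCsub [PCsemi PCtri]].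
split.
  exists (fun w => oca_accepts X (tM T) w \/ LC w); split.
    apply: union_one_counter => //; by exists (tM T).
  move=> g; split.
    case=> [/imgT|/imgC] [w [Hw E]]; exists w; split => //; by [left | right].
  by move=> [w [[Hw|Hw] E]]; [left; apply/imgT | right; apply/imgC]; exists w.
have tau1 : tau gone = 0 by apply: C1.
have PC1 : ~ PC gone by move=> H; have [_ [H' _]] := PCtri gone C1; exact: H'.
split.
  move=> g h [Hg|Hg] [Hh|Hh].
  - left; rewrite /Ptau; have := lb g h; move: Hg Hh; rewrite /Ptau; lia.
  - left; have Ch := PCsub _ Hh; move: Ch; rewrite /C => Ch.
    have := lb g h; move: Hg; rewrite /Ptau Ch => Hg Hl.
    case: (ltrgtP (tau (gmul g h)) 0) => Hgh //; first lia.
    have : C g by rewrite -(gcancel1 g h); apply: Cmul; [exact: Hgh | apply: Cinv; exact: Ch].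
    rewrite /C; lia.
  - left; have Cg := PCsub _ Hg; move: Cg; rewrite /C => Cg.
    have := lb g h; move: Hh; rewrite /Ptau Cg => Hh Hl.
    case: (ltrgtP (tau (gmul g h)) 0) => Hgh //; first lia.
    have : C h by rewrite -(gcancel2 g h); apply: Cmul; [apply: Cinv; exact: Cg | exact: Hgh].
    rewrite /C; lia.
  - right; exact: PCsemi.
move=> g; split.
  case: (ltrgtP (tau g) 0) => Hg.
  - right; right; left; rewrite /Ptau Hinv; lia.
  - left; left; exact: Hg.
  - have [[H|[H|H]] _] := PCtri g Hg.
    + by left; right.
    + by right; left.
    + by right; right; right.
have notP1 : ~ (Ptau gone \/ PC gone).
  by move=> [H|H]; [move: H; rewrite /Ptau tau1 | exact: PC1].
split; first by move=> [H E]; subst g; exact: notP1.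
split; last by move=> [E H]; subst g; rewrite ginv1 in H; exact: notP1.
move=> [[Hg|Hg] [Hg'|Hg']].
- move: Hg Hg'; rewrite /Ptau Hinv; lia.
- have := PCsub _ Hg'; move: Hg; rewrite /C /Ptau Hinv; lia.
- have := PCsub _ Hg; move: Hg'; rewrite /C /Ptau Hinv; lia.
- have [_ [_ [H _]]] := PCtri g (PCsub _ Hg); exact: H.
Qed.
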